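(* Let $\mathbf{E}\in\mathbb{K}^{m\times\sigma}$ with $\sigma\ge 2$, let $\mathbf{J}\in\mathbb{K}^{\sigma\times\sigma}$ be upper triangular, let $\mathbf{E}^{(1)}$ be the first $\lceil\sigma/2\rceil$ columns of $\mathbf{E}$ and $\mathbf{J}^{(1)}$, $\mathbf{J}^{(2)}$ the leading $\lceil\sigma/2\rceil\times\lceil\sigma/2\rceil$ and trailing $\lfloor\sigma/2\rfloor\times\lfloor\sigma/2\rfloor$ principal submatrices of $\mathbf{J}$. Let $\mathbf{s}\in\mathbb{Z}^m$, let $\mathbf{P}^{(1)}$ be the $\mathbf{s}$-Popov interpolation basis for $(\mathbf{E}^{(1)},\mathbf{J}^{(1)})$ with $\mathbf{s}$-minimal degree $\boldsymbol{\delta}^{(1)}$, let $\mathbf{E}^{(2)}$ be the last $\lfloor\sigma/2\rfloor$ columns of $\mathbf{P}^{(1)}\cdot\mathbf{E}$ (the matrix whose $i$-th row is the $i$-th row of $\mathbf{P}^{(1)}$ applied to $\mathbf{E}$), and let $\mathbf{P}^{(2)}$ be the $(\mathbf{s}+\boldsymbol{\delta}^{(1)})$-Popov interpolation basis for $(\mathbf{E}^{(2)},\mathbf{J}^{(2)})$ with $(\mathbf{s}+\boldsymbol{\delta}^{(1)})$-minimal degree $\boldsymbol{\delta}^{(2)}$. Then $\mathbf{P}^{(2)}\mathbf{P}^{(1)}$ is an $\mathbf{s}$-reduced interpolation basis for $(\mathbf{E},\mathbf{J})$, and the $\mathbf{s}$-minimal degree of $(\mathbf{E},\mathbf{J})$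 is $\boldsymbol{\delta}^{(1)}+\boldsymbol{\delta}^{(2)}$.
   Context: For $p\in\mathbb{K}[X]$ and $\mathbf{e}\in\mathbb{K}^{1\times\sigma}$, $p\cdot\mathbf{e}=\mathbf{e}\,p(\mathbf{J})$; for $\mathbf{p}=(p_1,\dots,p_m)$, $\mathbf{p}\cdot\mathbf{E}=\sum_i p_i\cdot\mathbf{e}_i$ with $\mathbf{e}_i$ the rows of $\mathbf{E}$. An interpolant for $(\mathbf{E},\mathbf{J})$ is $\mathbf{p}$ with $\mathbf{p}\cdot\mathbf{E}=0$; an interpolation basis is a matrix in $\mathbb{K}[X]^{m\times m}$ whose rows form a basis of the (free, rank $m$) module of interpolants. For $\mathbf{s}\in\mathbb{Z}^m$: the $\mathbf{s}$-degree of a nonzero row $[p_j]$ is $\max_j(\deg p_j+s_j)$; the $\mathbf{s}$-leading matrix of a full-rank $\mathbf{P}$ with row $\mathbf{s}$-degrees $d_i$ has $(i,j)$ entry the coefficient of degree $d_i-s_j$ of $p_{ij}$; $\mathbf{P}$ is $\mathbf{s}$-reduced if this matrix has full row rank. The $\mathbf{s}$-pivot index of a row is the largest $j$ attaining its $\mathbf{s}$-degree and $p_j$ its pivot entry. A nonsingular matrix is in $\mathbf{s}$-Popov form if its $\mathbf{s}$-pivot entries are monic and on the diagonal and in each column nonpivot entries have degree less than the pivot entry. The $\mathbf{s}$-Popov interpolation basis is the unique interpolation basis in $\mathbf{s}$-Popov form, and the $\mathbf{s}$-minimal degree is the tuple of degrees of its diagonal entries. *)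

(* Defs.v *)
From HB Require Import structures.
From mathcomp Require Import all_boot all_order all_algebra.
Set Implicit Arguments. Unset Strict Implicit. Unset Printing Implicit Defensive.
Import Order.TTheory GRing.Theory Num.Theory.
Local Open Scope ring_scope.

Section Defs.
Variable K : fieldType.

Definition pact n (J : 'M[K]_n) (p : {poly K}) (e : 'rV[K]_n) : 'rV[K]_n :=
  \sum_(i < size p) p`_i *: iter i (fun v => v *m J) e.

Definition applymx k m n (J : 'M[K]_n) (P : 'M[{poly K}]_(k, m))
    (E : 'M[K]_(m, n)) : 'M[K]_(k, n) :=
  \matrix_(i < k, l < n) (\sum_(j < m) pact J (P i j) (row j E)) 0 l.

Definition interpolant m n (E : 'M[K]_(m, n)) (J : 'M[K]_n)
    (p : 'rV[{poly K}]_m) : Prop := applymx J p E = 0.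

Definition interp_basis m n (E : 'M[K]_(m, n)) (J : 'M[K]_n)
    (P : 'M[{poly K}]_m) : Prop :=
  [/\ forall i, interpolant E J (row i P),
      forall p, interpolant E J p -> exists u : 'rV[{poly K}]_m, p = u *m P
    & forall u : 'rV[{poly K}]_m, u *m P = 0 -> u = 0].

Definition pdeg (p : {poly K}) : int := ((size p).-1)%:Z.

(* s-degree of a row; the default value is only relevant for the zero row
   and is below every candidate value *)
Definition rdeg m (s : 'I_m -> int) (p : 'rV[{poly K}]_m) : int :=
  \big[Num.max/ (- \sum_(k < m) `|s k|)]_(j < m | p 0 j != 0) (pdeg (p 0 j) + s j).

Definition coefZ (p : {poly K}) (d : int) : K :=
  match d with Posz n => p`_n | Negz _ => 0 end.

Definition lmat k m (s : 'I_m -> int) (P : 'M[{poly K}]_(k, m)) : 'M[K]_(k, m) :=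
  \matrix_(i < k, j < m) coefZ (P i j) (rdeg s (row i P) - s j).

Definition sreduced m (s : 'I_m -> int) (P : 'M[{poly K}]_m) : Prop :=
  \det P != 0 /\ row_free (lmat s P).

Definition is_pivot m (s : 'I_m -> int) (p : 'rV[{poly K}]_m) (j : 'I_m) : Prop :=
  [/\ p 0 j != 0, pdeg (p 0 j) + s j = rdeg s p
    & forall k : 'I_m, (j < k)%N -> p 0 k != 0 -> pdeg (p 0 k) + s k < rdeg s p].

Definition popov m (s : 'I_m -> int) (P : 'M[{poly K}]_m) : Prop :=
  [/\ \det P != 0,
      forall i, is_pivot s (row i P) i,
      forall i, P i i \is monic
    & forall i j, i != j -> (size (P i j) < size (P j j))%N].

Definition popov_basis m n (s : 'I_m -> int) (E : 'M[K]_(m, n)) (J : 'M[K]_n)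
    (P : 'M[{poly K}]_m) : Prop :=
  interp_basis E J P /\ popov s P.

Definition diagdeg m (P : 'M[{poly K}]_m) (i : 'I_m) : nat := (size (P i i)).-1.

Definition upper_tri n (J : 'M[K]_n) : Prop :=
  forall i j : 'I_n, (j < i)%N -> J i j = 0.

End Defs.

Lemma half_split (n : nat) : n = (uphalf n + n./2)%N.
Proof. by rewrite uphalf_half -addnA addnn odd_double_half. Qed.

(* Main.v *)
Require Import Defs.
From HB Require Import structures.
From mathcomp Require Import all_boot all_order all_algebra.
From mathcomp Require Import zify.
Set Implicit Arguments. Unset Strict Implicit. Unset Printing Implicit Defensive.
Import Order.TTheory GRing.Theory Num.Theory.
Local Open Scope ring_scope.

Section Rho.
Variable K : fieldType.

Definition rho n (J : 'M[K]_n) (p : {poly K}) : 'M[K]_n :=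
  \sum_(i < size p) p`_i *: J ^+ i.

Lemma rho_horner n (J : 'M[K]_n.+1) p : rho J p = horner_mx J p.
Proof.
rewrite /horner_mx /horner_morph horner_coef size_map_inj_poly; last first.
- by apply/matrixP=> i j; rewrite !mxE mul0rn.
- by move=> a b /matrixP/(_ ord0 ord0); rewrite !mxE eqxx /= !mulr1n.
rewrite /rho; apply: eq_bigr => i _.
by rewrite coef_map /= -mul_scalar_mx.
Qed.

Lemma rhoD n (J : 'M[K]_n) p q : rho J (p + q) = rho J p + rho J q.
Proof.
case: n J => [|n] J; first by rewrite !flatmx0.
by rewrite !rho_horner rmorphD.
Qed.

Lemma rhoM n (J : 'M[K]_n) p q : rho J (p * q) = rho J p *m rho J q.
Proof.
case: n J => [|n] J; first by rewrite !flatmx0.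
by rewrite !rho_horner rmorphM.
Qed.

Lemma rho0 n (J : 'M[K]_n) : rho J 0 = 0.
Proof. by rewrite /rho size_poly0 big_ord0. Qed.

Lemma rho_sum n (J : 'M[K]_n) I (r : seq I) (P : pred I) (F : I -> {poly K}) :
  rho J (\sum_(i <- r | P i) F i) = \sum_(i <- r | P i) rho J (F i).
Proof. by apply: (big_morph _ (@rhoD n J) (rho0 J)). Qed.

Lemma rhoC n (J : 'M[K]_n) p q : rho J p *m rho J q = rho J q *m rho J p.
Proof. by rewrite -!rhoM mulrC. Qed.

Lemma iter_mulmx n (J : 'M[K]_n) i (e : 'rV[K]_n) :
  iter i (fun v => v *m J) e = e *m J ^+ i.
Proof.
elim: i => [|i IH] /=; first by rewrite expr0 mulmx1.
by rewrite IH exprSr mulmxA.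
Qed.

Lemma pactE n (J : 'M[K]_n) p e : pact J p e = e *m rho J p.
Proof.
rewrite /pact /rho mulmx_sumr; apply: eq_bigr => i _.
by rewrite iter_mulmx scalemxAr.
Qed.

Lemma row_applymx k m n (J : 'M[K]_n) (P : 'M[{poly K}]_(k, m)) E i :
  row i (applymx J P E) = \sum_(j < m) row j E *m rho J (P i j).
Proof.
apply/rowP => l; rewrite !mxE !summxE; apply: eq_bigr => j _.
by rewrite pactE.
Qed.

Lemma applymx_mul k m m' n (J : 'M[K]_n) (A : 'M[{poly K}]_(k, m))
   (B : 'M[{poly K}]_(m, m')) E :
  applymx J (A *m B) E = applymx J A (applymx J B E).
Proof.
apply/row_matrixP => i; rewrite !row_applymx.
under eq_bigr => j _ do rewrite mxE rho_sum mulmx_sumr.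
rewrite exchange_big /=; apply: eq_bigr => kk _.
rewrite row_applymx mulmx_suml; apply: eq_bigr => j _.
by rewrite mulrC rhoM mulmxA.
Qed.

Lemma applymx_row k m n (J : 'M[K]_n) (P : 'M[{poly K}]_(k, m)) E i :
  applymx J (row i P) E = row i (applymx J P E).
Proof. by apply/rowP => l; rewrite !mxE !summxE; apply: eq_bigr => j _; rewrite mxE. Qed.

Lemma applymx0 k m n (J : 'M[K]_n) (P : 'M[{poly K}]_(k, m)) :
  applymx J P 0 = 0.
Proof.
apply/row_matrixP => i; rewrite row_applymx row0 big1 // => j _.
by rewrite row0 mul0mx.
Qed.

Lemma applymx_cast k m n n' (h : n = n') (J : 'M[K]_n)
   (P : 'M[{poly K}]_(k, m)) E :
  castmx (erefl k, h) (applymx J P E) =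
  applymx (castmx (h, h) J) P (castmx (erefl m, h) E).
Proof. by case: n' / h; rewrite !castmx_id. Qed.

Lemma interp_basis_cast m n n' (h : n = n') (J : 'M[K]_n) E P :
  interp_basis E J P <->
  interp_basis (castmx (erefl m, h) E) (castmx (h, h) J) P.
Proof. by case: n' / h; rewrite !castmx_id. Qed.

Section Block.
Variables (a b : nat) (J : 'M[K]_(a + b)).
Hypothesis J0 : dlsubmx J = 0.

Lemma expJ_block i : exists X, J ^+ i = block_mx (ulsubmx J ^+ i) X 0 (drsubmx J ^+ i).
Proof.
elim: i => [|i [X IH]].
  by exists 0; rewrite !expr0 -scalar_mx_block.
exists (ulsubmx J ^+ i *m ursubmx J + X *m drsubmx J).
rewrite exprSr IH -mulmxE -[X in _ *m X](submxK J) J0 mulmx_block.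
by rewrite !mulmx0 !mul0mx !addr0 add0r !mulmxE -!exprSr.
Qed.

Lemma rho_block p : exists X,
  rho J p = block_mx (rho (ulsubmx J) p) X 0 (rho (drsubmx J) p).
Proof.
rewrite /rho; elim/big_rec3: _ => [|i A B C _ [X IH]].
  by exists 0; rewrite block_mx0.
have [Y ->] := expJ_block i.
exists (p`_i *: Y + X); rewrite IH scale_block_mx add_block_mx.
by rewrite scaler0 addr0.
Qed.

Lemma lsub_mulrho k (e : 'M[K]_(k, a + b)) p :
  lsubmx (e *m rho J p) = lsubmx e *m rho (ulsubmx J) p.
Proof.
have [X ->] := rho_block p.
by rewrite -{1}(hsubmxK e) mul_row_block row_mxKl mulmx0 addr0.
Qed.

Lemma rsub_mulrho k (e : 'M[K]_(k, a + b)) p : lsubmx e = 0 ->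
  rsubmx (e *m rho J p) = rsubmx e *m rho (drsubmx J) p.
Proof.
move=> e0; have [X ->] := rho_block p.
by rewrite -{1}(hsubmxK e) e0 mul_row_block row_mxKr !mul0mx add0r.
Qed.

Lemma row_lsub k c d (A : 'M[K]_(k, c + d)) i : row i (lsubmx A) = lsubmx (row i A).
Proof. by apply/rowP => l; rewrite !mxE. Qed.

Lemma row_rsub k c d (A : 'M[K]_(k, c + d)) i : row i (rsubmx A) = rsubmx (row i A).
Proof. by apply/rowP => l; rewrite !mxE. Qed.

Lemma lsub_applymx k m (P : 'M[{poly K}]_(k, m)) E :
  lsubmx (applymx J P E) = applymx (ulsubmx J) P (lsubmx E).
Proof.
apply/row_matrixP => i; rewrite row_lsub !row_applymx linear_sum /=.
by apply: eq_bigr => j _; rewrite lsub_mulrho row_lsub.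
Qed.

Lemma rsub_applymx k m (P : 'M[{poly K}]_(k, m)) E : lsubmx E = 0 ->
  rsubmx (applymx J P E) = applymx (drsubmx J) P (rsubmx E).
Proof.
move=> E0; apply/row_matrixP => i; rewrite row_rsub !row_applymx linear_sum /=.
apply: eq_bigr => j _; rewrite rsub_mulrho ?row_rsub //.
by rewrite -row_lsub E0 row0.
Qed.

End Block.

Lemma interp_compose m a b (J : 'M[K]_(a + b)) (E : 'M[K]_(m, a + b)) P1 P2 :
  dlsubmx J = 0 -> interp_basis (lsubmx E) (ulsubmx J) P1 ->
  interp_basis (rsubmx (applymx J P1 E)) (drsubmx J) P2 ->
  interp_basis E J (P2 *m P1).
Proof.
move=> J0 [r1 s1 i1] [r2 s2 i2].
set F := applymx J P1 E.
have F0 : lsubmx F = 0.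
  apply/row_matrixP => i; rewrite /F lsub_applymx // -applymx_row row0.
  exact: r1.
have key u : applymx J u F = row_mx 0 (applymx (drsubmx J) u (rsubmx F)).
  by rewrite -(hsubmxK (applymx J u F)) lsub_applymx // F0 applymx0 rsub_applymx.
split.
- move=> i; rewrite /interpolant row_mul applymx_mul -/F key.
  by rewrite (r2 i) row_mx0.
- move=> p pE.
  have : interpolant (lsubmx E) (ulsubmx J) p.
    by rewrite /interpolant -lsub_applymx // pE linear0.
  case/s1 => u pu.
  have : interpolant (rsubmx F) (drsubmx J) u.
    move: pE; rewrite /interpolant pu applymx_mul -/F key -row_mx0.
    by case/eq_row_mx.
  case/s2 => v uv; exists v; by rewrite pu uv mulmxA.
- move=> u; rewrite mulmxA => /i1 /i2 //.
Qed.

End Rho.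

Section Deg.
Variable K : fieldType.
Implicit Types p q : {poly K}.
Local Notation cZ := Defs.coefZ.

Definition degle p (d : int) := p != 0 -> pdeg p <= d.

Lemma pdeg_ge0 p : 0 <= pdeg p.
Proof. by rewrite /pdeg. Qed.

Lemma cZ0 d : cZ (0 : {poly K}) d = 0.
Proof. by case: d => [n|n] //=; rewrite coef0. Qed.

Lemma cZ_small p d : (p != 0 -> pdeg p < d) -> cZ p d = 0.
Proof.
have [-> _|pn0 /(_ isT)] := eqVneq p 0; first exact: cZ0.
case: d => [n|n] //= lt; apply: nth_default.
move: lt; rewrite /pdeg ltz_nat; case: (size p) => //= k; rewrite ltnS.
Qed.

Lemma cZ_lead p : cZ p (pdeg p) = lead_coef p.
Proof. by []. Qed.

Lemma degle_coef p d : degle p d -> cZ p d != 0 -> p != 0 /\ pdeg p = d.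
Proof.
move=> dl cn; have pn0 : p != 0 by apply: contraNneq cn => ->; rewrite cZ0.
split => //; apply/eqP; rewrite eq_le dl //=; apply: contraNT cn.
by rewrite -ltNge => lt; rewrite cZ_small.
Qed.

Lemma degle_lt p d : degle p d -> cZ p d = 0 -> p != 0 -> pdeg p < d.
Proof.
move=> dl c0 pn0; rewrite lt_neqAle dl // andbT; apply/eqP => e; move: c0; rewrite -e.
by rewrite cZ_lead; apply/eqP; rewrite lead_coef_eq0.
Qed.

Lemma cZD p q d : cZ (p + q) d = cZ p d + cZ q d.
Proof. by case: d => [n|n] //=; rewrite ?coefD ?addr0. Qed.

Lemma cZ_sum I (r : seq I) (P : pred I) (F : I -> {poly K}) d :
  cZ (\sum_(i <- r | P i) F i) d = \sum_(i <- r | P i) cZ (F i) d.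
Proof. exact: (big_morph _ (fun p q => cZD p q d) (cZ0 d)). Qed.

Lemma degle_pos p (n : nat) : degle p n%:Z <-> (size p <= n.+1)%N.
Proof.
split.
- move=> h; have [->|pn] := eqVneq p 0; first by rewrite size_poly0.
  by move: (h pn); rewrite /pdeg lez_nat; case: (size p).
- move=> h _; rewrite /pdeg lez_nat; move: h; case: (size p) => //.
Qed.

Lemma degle_neg p n : degle p (Negz n) -> p = 0.
Proof.
move=> h; apply/eqP; apply: contraT => /h.
by rewrite leNgt (lt_le_trans _ (pdeg_ge0 p)).
Qed.

Lemma degle_mono p d d' : degle p d -> d <= d' -> degle p d'.
Proof. by move=> h le pn; apply: le_trans (h pn) le. Qed.

Lemma degle0 d : degle 0 d.
Proof. by rewrite /degle eqxx. Qed.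

Lemma degleD p q d : degle p d -> degle q d -> degle (p + q) d.
Proof.
case: d => [n|n].
- move=> /degle_pos hp /degle_pos hq; apply/degle_pos; apply: leq_trans (size_polyD p q) _.
  by rewrite geq_max hp hq.
- by move=> /degle_neg -> /degle_neg ->; rewrite addr0; apply: degle0.
Qed.

Lemma degle_sum I (r : seq I) (P : pred I) (F : I -> {poly K}) d :
  (forall i, P i -> degle (F i) d) -> degle (\sum_(i <- r | P i) F i) d.
Proof.
move=> h; elim/big_rec: _ => [|i x Pi hx]; first exact: degle0.
exact: degleD (h i Pi) hx.
Qed.

Lemma coefM_top p q (a b : nat) : (size p <= a.+1)%N -> (size q <= b.+1)%N ->
  (p * q)`_(a + b) = p`_a * q`_b.
Proof.
move=> hp hq; rewrite coefM (bigD1 (Ordinal (leq_addr b a.+1))) //= addKn.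
rewrite big1 ?addr0 // => j /eqP/val_eqP /= ja.
have [lt|gt] := ltnP j a.
  rewrite [q`__]nth_default ?mulr0 //; apply: leq_trans hq _.
  move: lt; case: j {ja} => j /= _ lt; lia.
rewrite [p`__]nth_default ?mul0r //; apply: leq_trans hp _.
by rewrite ltn_neqAle eq_sym ja.
Qed.

Lemma degleM p q a b : degle p a -> degle q b ->
  degle (p * q) (a + b) /\ cZ (p * q) (a + b) = cZ p a * cZ q b.
Proof.
have [-> _ _|pn] := eqVneq p 0; first by rewrite !mul0r !cZ0 mul0r; split=> //; apply: degle0.
have [-> _ _|qn] := eqVneq q 0; first by rewrite !mulr0 !cZ0 mulr0; split=> //; apply: degle0.
case: a => [a|a]; last by move/degle_neg => p0; rewrite p0 eqxx in pn.
case: b => [b|b]; last by move=> _ /degle_neg => q0; rewrite q0 eqxx in qn.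
move=> /degle_pos hp /degle_pos hq; split.
  apply/degle_pos; rewrite size_mul //.
  have H x y : (x <= a.+1 -> y <= b.+1 -> (x + y).-1 <= (a + b).+1)%N by lia.
  exact: H.
by rewrite -PoszD /= coefM_top.
Qed.


Lemma rdeg_ge m (s : 'I_m -> int) (p : 'rV[{poly K}]_m) j :
  p 0 j != 0 -> pdeg (p 0 j) + s j <= rdeg s p.
Proof. by move=> nz; rewrite /rdeg; apply: le_bigmax_cond. Qed.

Lemma rdegE m (s : 'I_m -> int) (p : 'rV[{poly K}]_m) j0 D :
  p 0 j0 != 0 -> pdeg (p 0 j0) + s j0 = D ->
  (forall j, p 0 j != 0 -> pdeg (p 0 j) + s j <= D) -> rdeg s p = D.
Proof.
move=> nz e hle; apply/eqP; rewrite eq_le; apply/andP; split; last first.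
  by rewrite -e; apply: rdeg_ge.
apply: bigmax_le => //.
have h1 : `|s j0| <= \sum_(k < m) `|s k|.
  by rewrite (bigD1 j0) //= lerDl sumr_ge0.
have h2 : s j0 <= D by rewrite -e lerDr pdeg_ge0.
have h3 : - `|s j0| <= s j0 by rewrite lerNl ler_normr lexx orbT.
by rewrite (le_trans _ (le_trans h3 h2)) // lerN2.
Qed.

Lemma PP m (s : 'I_m -> int) (R : 'M[{poly K}]_m) (u : 'rV[{poly K}]_m)
    (i0 : 'I_m) :
  (forall i, is_pivot s (row i R) i) -> u 0 i0 != 0 ->
  (forall i, u 0 i != 0 ->
     pdeg (u 0 i) + rdeg s (row i R) <= pdeg (u 0 i0) + rdeg s (row i0 R)) ->
  (forall i : 'I_m, (i0 < i)%N -> u 0 i != 0 ->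
     pdeg (u 0 i) + rdeg s (row i R) < pdeg (u 0 i0) + rdeg s (row i0 R)) ->
  is_pivot s (u *m R) i0 /\
  pdeg ((u *m R) 0 i0) = pdeg (u 0 i0) + pdeg (R i0 i0).
Proof.
move=> piv ui0 hle hlt.
set D := pdeg (u 0 i0) + rdeg s (row i0 R).
set r := fun i : 'I_m => rdeg s (row i R).
have rR (i : 'I_m) : r i = pdeg (R i i) + s i.
  by case: (piv i) => _ e _; rewrite /r -e mxE.
have Rnz (i : 'I_m) : R i i != 0 by case: (piv i); rewrite mxE.
have term (i l : 'I_m) : degle (u 0 i * R i l) (D - s l) /\
    cZ (u 0 i * R i l) (D - s l) = cZ (u 0 i) (D - r i) * cZ (R i l) (r i - s l).
  have -> : D - s l = (D - r i) + (r i - s l) by rewrite addrA subrK.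
  apply: degleM.
    by move=> nz; rewrite lerBrDr hle.
  by move=> nz; rewrite lerBrDr; have := @rdeg_ge _ s (row i R) l; rewrite !mxE; apply.
have cu0 (i : 'I_m) : (i0 < i)%N -> cZ (u 0 i) (D - r i) = 0.
  by move=> lt; apply: cZ_small => nz; rewrite ltrBrDr hlt.
have cR0 (i l : 'I_m) : (i < l)%N -> cZ (R i l) (r i - s l) = 0.
  move=> lt; apply: cZ_small => nz; rewrite ltrBrDr.
  by case: (piv i) => _ _ /(_ l lt); rewrite !mxE; apply.
have col (l : 'I_m) : degle ((u *m R) 0 l) (D - s l) /\
    cZ ((u *m R) 0 l) (D - s l) =
    \sum_i cZ (u 0 i) (D - r i) * cZ (R i l) (r i - s l).
  rewrite mxE; split; first by apply: degle_sum => i _; exact: (term i l).1.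
  by rewrite cZ_sum; apply: eq_bigr => i _; exact: (term i l).2.
have bigl (l : 'I_m) : (i0 < l)%N -> cZ ((u *m R) 0 l) (D - s l) = 0.
  move=> lt; rewrite (col l).2 big1 // => i _.
  have [h|h] := ltnP i0 i; first by rewrite cu0 ?mul0r.
  by rewrite cR0 ?mulr0 // (leq_ltn_trans h lt).
have diag : cZ ((u *m R) 0 i0) (D - s i0) != 0.
  rewrite (col i0).2 (bigD1 i0) //= big1 ?addr0; last first.
    move=> i ne; have [h|h] := ltnP i0 i; first by rewrite cu0 ?mul0r.
    by rewrite cR0 ?mulr0 // ltn_neqAle h andbT; apply: contra ne => /eqP/val_inj ->.
  have -> : D - r i0 = pdeg (u 0 i0) by rewrite /D addrK.
  have -> : r i0 - s i0 = pdeg (R i0 i0) by rewrite rR addrK.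
  by rewrite !cZ_lead mulf_neq0 // lead_coef_eq0.
have [pnz pdeg0] := degle_coef (col i0).1 diag.
have rd : rdeg s (u *m R) = D.
  apply: (rdegE pnz); first by rewrite pdeg0 subrK.
  by move=> j nz; rewrite -lerBrDr; apply: (col j).1.
split.
  split => //; first by rewrite rd pdeg0 subrK.
  by move=> l lt nz; rewrite rd -ltrBrDr; apply: degle_lt (col l).1 (bigl l lt) nz.
by rewrite pdeg0 /D -/(r i0) rR addrA addrK.
Qed.


Lemma exist_best m (P : pred 'I_m) (F : 'I_m -> int) j : P j ->
  exists i0, [/\ P i0, forall i, P i -> F i <= F i0 &
                    forall i : 'I_m, (i0 < i)%N -> P i -> F i < F i0].
Proof.
move=> Pj; case: (arg_maxP F Pj) => i1 Pi1 max1.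
have Q1 : (P i1 && (F i1 == F i1)) by rewrite Pi1 eqxx.
case: (@arg_maxnP _ i1 (fun i => P i && (F i == F i1)) (fun i : 'I_m => val i) Q1) => i0 /andP[Pi0 /eqP e] max0.
exists i0; split => // [i Pi|i lt Pi]; first by rewrite e; apply: max1.
have mi := max1 i Pi; rewrite /= in mi; rewrite lt_neqAle e mi andbT; apply/negP => /eqP ei.
by have := max0 i; rewrite Pi ei eqxx /= => /(_ isT); rewrite leqNgt lt.
Qed.

Lemma pivot_uniq m (s : 'I_m -> int) (p : 'rV[{poly K}]_m) i j :
  is_pivot s p i -> is_pivot s p j -> i = j.
Proof.
case=> nzi ei hi [nzj ej hj]; case: (ltngtP i j) => h.
- by have := hi j h nzj; rewrite ej ltxx.
- by have := hj i h nzi; rewrite ei ltxx.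
- exact: val_inj.
Qed.

Lemma wp_rowfree m (s : 'I_m -> int) (R : 'M[{poly K}]_m) :
  (forall i, is_pivot s (row i R) i) -> row_free (lmat s R).
Proof.
move=> piv; rewrite row_free_unit unitmxE det_trig.
  rewrite unitfE prodf_seq_neq0; apply/allP => i _ /=; rewrite mxE.
  case: (piv i) => nz e _; rewrite -e addrK !mxE cZ_lead lead_coef_eq0.
  by move: nz; rewrite mxE.
apply/is_trig_mxP => i j lt; rewrite mxE; apply: cZ_small => nz.
rewrite ltrBrDr; case: (piv i) => _ _ /(_ j lt); rewrite !mxE; apply => //.
Qed.

Lemma pivdeg_le m (s : 'I_m -> int) (R1 R2 : 'M[{poly K}]_m) :
  (forall i, is_pivot s (row i R1) i) -> (forall i, is_pivot s (row i R2) i) ->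
  (forall i, exists u, row i R1 = u *m R2) ->
  forall i, pdeg (R2 i i) <= pdeg (R1 i i).
Proof.
move=> p1 p2 sp i; have [u ue] := sp i.
have [j uj] : exists j, u 0 j != 0.
  apply/existsP; apply: contraT; rewrite negb_exists => /forallP u0.
  have : u = 0 by apply/rowP => j; rewrite mxE; apply/eqP; rewrite -[_ == _]negbK u0.
  move=> u00; case: (p1 i); rewrite ue u00 mul0mx mxE eqxx //.
have [i0 [ui0 hle hlt]] := @exist_best _ (fun i => u 0 i != 0)
  (fun i => pdeg (u 0 i) + rdeg s (row i R2)) _ uj.
have [pv dg] := PP p2 ui0 hle hlt.
have ii0 : i = i0 by apply: pivot_uniq (p1 i) _; rewrite ue.
move: dg; rewrite -ii0 -ue mxE => ->.
by rewrite lerDr pdeg_ge0.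
Qed.

End Deg.

Unset Implicit Arguments.
Theorem mainTheorem6 (K : fieldType) (m sigma : nat)
    (E : 'M[K]_(m, sigma)) (J : 'M[K]_sigma) (s : 'I_m -> int)
    (P1 P2 : 'M[{poly K}]_m) :
  (2 <= sigma)%N -> upper_tri J ->
  let Es := castmx (erefl m, half_split sigma) E in
  let Js := castmx (half_split sigma, half_split sigma) J in
  let E1 := lsubmx Es in
  let J1 := ulsubmx Js in
  let J2 := drsubmx Js in
  popov_basis s E1 J1 P1 ->
  let delta1 := diagdeg P1 in
  let E2 := rsubmx (castmx (erefl m, half_split sigma) (applymx J P1 E)) in
  let s2 := fun i => s i + (delta1 i)%:Z in
  popov_basis s2 E2 J2 P2 ->
  let delta2 := diagdeg P2 in
  [/\ interp_basis E J (P2 *m P1),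
      sreduced s (P2 *m P1)
    & forall P, popov_basis s E J P -> forall i, diagdeg P i = (delta1 i + delta2 i)%N].
Proof.
move=> Hs ut Es Js E1 J1 J2 [ib1 pop1] delta1 E2 s2 [ib2 pop2] delta2.
have J0 : dlsubmx Js = 0.
  apply/matrixP => i j; rewrite !mxE castmxE; apply: ut => /=.
  exact: leq_trans (ltn_ord j) (leq_addr _ _).
have E2e : E2 = rsubmx (applymx Js P1 Es) by rewrite /E2 applymx_cast.
have ibQ : interp_basis E J (P2 *m P1).
  apply/(interp_basis_cast (half_split sigma)).
  apply: interp_compose => //; by rewrite -E2e.
case: pop1 => det1 piv1 mon1 _.
case: pop2 => det2 piv2 mon2 _.
have rR1 k : rdeg s (row k P1) = s2 k.
  case: (piv1 k) => _ e _; rewrite -e mxE /s2 addrC.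
  by rewrite /delta1 /diagdeg /pdeg.
have Qpiv i : is_pivot s (row i (P2 *m P1)) i /\
    pdeg ((P2 *m P1) i i) = pdeg (P2 i i) + pdeg (P1 i i).
  case: (piv2 i) => nz e lt.
  rewrite !mxE in nz e.
  have nzu : row i P2 0 i != 0 by rewrite mxE.
  have hle : forall k, row i P2 0 k != 0 ->
      pdeg (row i P2 0 k) + rdeg s (row k P1) <=
      pdeg (row i P2 0 i) + rdeg s (row i P1).
    move=> k nzk; rewrite !rR1 !mxE e.
    by have := @rdeg_ge _ _ s2 (row i P2) k; rewrite !mxE; apply; rewrite mxE in nzk.
  have hlt : forall k : 'I_m, (i < k)%N -> row i P2 0 k != 0 ->
      pdeg (row i P2 0 k) + rdeg s (row k P1) <
      pdeg (row i P2 0 i) + rdeg s (row i P1).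
    move=> k ik nzk; rewrite !rR1 !mxE e.
    by have := lt k ik; rewrite !mxE; apply; rewrite mxE in nzk.
  have [pv dg] := PP piv1 nzu hle hlt.
  split; first by rewrite row_mul.
  have r1 : (row i (P2 *m P1)) 0 i = (P2 *m P1) i i by rewrite [LHS]mxE.
  have r2 : (row i P2) 0 i = P2 i i by rewrite [LHS]mxE.
  by rewrite -r1 -r2 row_mul.
split => //.
  split; first by rewrite det_mulmx mulf_neq0.
  by apply: wp_rowfree => i; case: (Qpiv i).
move=> P [ibP [detP pivP _ _]] i.
have le1 := pivdeg_le pivP (fun i => (Qpiv i).1) _ i.
have le2 := pivdeg_le (fun i => (Qpiv i).1) pivP _ i.
have e : pdeg (P i i) = pdeg ((P2 *m P1) i i).
  apply/eqP; rewrite eq_le le2 ?le1 //.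
  - by move=> k; case: ibQ => r sp _; apply: sp; case: ibP => rq _ _; apply: rq.
  - by move=> k; case: ibP => r sp _; apply: sp; case: ibQ => rq _ _; apply: rq.
move: e; rewrite (Qpiv i).2 /pdeg -PoszD => -[].
by rewrite /diagdeg /delta1 /delta2 addnC.
Qed.
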